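(* Let $q$ be a prime power. Let $C_1=[n,k_1,d_1]_q$ and $C_2=[n,k_2,d_2]_q$ be linear codes over $\mathbb{F}_q$ with $C_2\subset C_1$ (giving, via the CSS construction, an AQECC $[[n,k,d_z/d_x]]_q$, $k=k_1-k_2$), and let $C_3=[n^{*},k_3,d_3]_q$ and $C_4=[n^{*},k_4,d_4]_q$ be linear codes over $\mathbb{F}_q$ with $C_4\subset C_3$ (giving an AQECC $[[n^{*},k^{*},d_z^{*}/d_x^{*}]]_q$, $k^{*}=k_3-k_4$). Let $d_2^{\perp}$ and $d_4^{\perp}$ be the minimum distances of the Euclidean duals $C_2^{\perp}$ and $C_4^{\perp}$. Then there exists an AQECC with parameters $[[n+n^{*}, k+k^{*}, d_z^{\diamond}/d_x^{\diamond}]]_q=[[n+n^{*},(k_1+k_3)-(k_2+k_4), d_z^{\diamond}/d_x^{\diamond}]]_q$, where $d_z^{\diamond}\geq\min\{d_1,d_3\}$ and $d_x^{\diamond}\geq\min\{d_2^{\perp},d_4^{\perp}\}$.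
   Context: An AQECC $[[n,k,d_z/d_x]]_q$ is a $q^k$-dimensional subspace of $\mathbb{C}^{q^n}$ correcting all qudit-flip errors up to $\lfloor (d_x-1)/2\rfloor$ and all phase-shift errors up to $\lfloor (d_z-1)/2\rfloor$. CSS construction: if $C_2\subset C_1\subseteq\mathbb{F}_q^n$ are linear of dimensions $k_2<k_1$, there is an AQECC $[[n,k_1-k_2,d_z/d_x]]_q$ with $d_z=\mathrm{wt}(C_1\setminus C_2)$, $d_x=\mathrm{wt}(C_2^{\perp}\setminus C_1^{\perp})$; such a code is said to be derived from $C_1,C_2$. *)

(* Defs.v *)
(* Linear codes over a finite field F (q = #|F|, automatically a
   prime power) are subspaces {vspace 'rV[F]_n} of F^n. *)
From HB Require Import structures.
From mathcomp Require Import all_boot all_order all_algebra all_field.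
Set Implicit Arguments. Unset Strict Implicit. Unset Printing Implicit Defensive.
Import GRing.Theory.
Local Open Scope ring_scope.

Section Codes.
Variable F : finFieldType.

Definition wt n (x : 'rV[F]_n) : nat := #|[set i : 'I_n | x 0 i != 0]|.

(* wt(S) = minimum weight of the elements of a set S (n.+1 plays the role of
   +infinity when S is empty). *)
Definition minwt n (S : {set 'rV[F]_n}) : nat :=
  \big[minn/n.+1]_(x in S) wt x.

Definition vset n (C : {vspace 'rV[F]_n}) : {set 'rV[F]_n} := [set x | x \in C].

Definition edual n (C : {vspace 'rV[F]_n}) : {set 'rV[F]_n} :=
  [set y : 'rV[F]_n | [forall x : 'rV[F]_n, (x \in C) ==> (\sum_i x 0 i * y 0 i == 0)]].

Definition mindist n (S : {set 'rV[F]_n}) : nat := minwt (S :\ 0).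

Definition CSS_derived n (C1 C2 : {vspace 'rV[F]_n}) (k dz dx : nat) : Prop :=
  [/\ (C2 <= C1)%VS, C2 != C1,
      k = (\dim C1 - \dim C2)%N,
      dz = minwt (vset C1 :\: vset C2)
    & dx = minwt (edual C2 :\: edual C1)].

Definition AQECC n (k dz dx : nat) : Prop :=
  exists C1 C2 : {vspace 'rV[F]_n}, CSS_derived C1 C2 k dz dx.

End Codes.

(* Main.v *)
Require Import Defs.
From HB Require Import structures.
From mathcomp Require Import all_boot all_order all_algebra all_field.
Set Implicit Arguments. Unset Strict Implicit. Unset Printing Implicit Defensive.
Import GRing.Theory.
Local Open Scope ring_scope.

Section HA.
Variable F : finFieldType.

Lemma minwt_le n (S : {set 'rV[F]_n}) x : x \in S -> (minwt S <= wt x)%N.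
Proof.
move=> xS; rewrite /minwt -big_filter.
have : x \in [seq i <- index_enum 'rV[F]_n | i \in S] by rewrite mem_filter xS mem_index_enum.
elim: [seq _ <- _ | _] => //= y r IH; rewrite inE big_cons => /orP[/eqP<-|/IH h].
  by rewrite geq_minl.
by rewrite geq_min h orbT.
Qed.

Lemma minwt_ge n (S : {set 'rV[F]_n}) m :
  (m <= n.+1)%N -> (forall x, x \in S -> m <= wt x)%N -> (m <= minwt S)%N.
Proof.
move=> hm hS; rewrite /minwt; elim/big_ind: _ => //.
  by move=> a b ha hb; rewrite leq_min ha hb.
Qed.

Lemma mindist_le n (S : {set 'rV[F]_n}) : (mindist S <= n.+1)%N.
Proof.
rewrite /mindist /minwt; elim/big_ind: _ => //.
  by move=> a b ha hb; rewrite geq_min ha.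
move=> x _; rewrite /wt; apply: leq_trans (max_card _) _; rewrite card_ord.
exact: leqnSn.
Qed.

Lemma wt_l n m (a : 'rV[F]_n) (b : 'rV[F]_m) : (wt a <= wt (row_mx a b))%N.
Proof.
rewrite /wt -(card_imset _ (@lshift_inj n m)); apply: subset_leq_card.
by apply/subsetP=> j /imsetP[i]; rewrite !inE => ha ->; rewrite row_mxEl.
Qed.

Lemma wt_r n m (a : 'rV[F]_n) (b : 'rV[F]_m) : (wt b <= wt (row_mx a b))%N.
Proof.
rewrite /wt -(card_imset _ (@rshift_inj n m)); apply: subset_leq_card.
by apply/subsetP=> j /imsetP[i]; rewrite !inE => ha ->; rewrite row_mxEr.
Qed.
End HA.
Section H.
Variable F : finFieldType.
Variables n m : nat.

Definition fl : 'Hom('rV[F]_n, 'rV[F]_(n+m)) := linfun (mulmxr (row_mx 1%:M 0)).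
Definition fr : 'Hom('rV[F]_m, 'rV[F]_(n+m)) := linfun (mulmxr (row_mx 0 1%:M)).

Lemma flE a : fl a = row_mx a 0.
Proof. by rewrite lfunE /= mul_mx_row mulmx1 mulmx0. Qed.
Lemma frE a : fr a = row_mx 0 a.
Proof. by rewrite lfunE /= mul_mx_row mulmx1 mulmx0. Qed.

Definition DS (C : {vspace 'rV[F]_n}) (C' : {vspace 'rV[F]_m}) := (fl @: C + fr @: C')%VS.

Lemma memDS (C : {vspace 'rV[F]_n}) (C' : {vspace 'rV[F]_m}) x : x \in DS C C' -> lsubmx x \in C /\ rsubmx x \in C'.
Proof.
case/memv_addP=> u /memv_imgP[a aC ->] [v /memv_imgP[b bC ->] ->].
by rewrite flE frE add_row_mx add0r addr0 row_mxKl row_mxKr.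
Qed.

Lemma memDS' (C : {vspace 'rV[F]_n}) (C' : {vspace 'rV[F]_m}) a b : a \in C -> b \in C' -> row_mx a b \in DS C C'.
Proof.
move=> aC bC; apply/memv_addP; exists (fl a); first exact: memv_img.
exists (fr b); first exact: memv_img.
by rewrite flE frE add_row_mx add0r addr0.
Qed.

Lemma dimDS (C : {vspace 'rV[F]_n}) (C' : {vspace 'rV[F]_m}) : \dim (DS C C') = (\dim C + \dim C')%N.
Proof.
have inj (aT : vectType F) (f : 'Hom(aT, 'rV[F]_(n+m))) : injective f -> lker f = 0%VS by move=> fi; apply/eqP/lker0P.
rewrite /DS dimv_disjoint_sum.
have -> : \dim (fl @: C) = \dim C.
  apply: limg_dim_eq; rewrite (inj _ fl) ?capv0 // => a b.
  by rewrite !flE => /eq_row_mx[].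
have -> : \dim (fr @: C') = \dim C'.
  apply: limg_dim_eq; rewrite (inj _ fr) ?capv0 // => a b.
  by rewrite !frE => /eq_row_mx[].
  by [].
apply/eqP; rewrite -subv0; apply/subvP=> x.
case/memv_capP=> /memv_imgP[a _ ->] /memv_imgP[b _].
rewrite flE frE => /eq_row_mx[-> _]; by rewrite memv0 row_mx0.
Qed.

Lemma DS_sub (C1 C2 : {vspace 'rV[F]_n}) (C3 C4 : {vspace 'rV[F]_m}) : (C2 <= C1)%VS -> (C4 <= C3)%VS -> (DS C2 C4 <= DS C1 C3)%VS.
Proof. by move=> h1 h2; apply: addvS; apply: limgS. Qed.

Lemma edual0 p (C : {vspace 'rV[F]_p}) : 0 \in edual C.
Proof. by rewrite inE; apply/forallP=> x; apply/implyP=> _; rewrite big1 // => i _; rewrite mxE mulr0. Qed.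

Lemma edualDS (C : {vspace 'rV[F]_n}) (C' : {vspace 'rV[F]_m}) y :
  y \in edual (DS C C') -> lsubmx y \in edual C /\ rsubmx y \in edual C'.
Proof.
rewrite -{1}[y]hsubmxK; set a := lsubmx y; set b := rsubmx y.
move=> /[dup] hy; rewrite inE => /forallP h; split; rewrite inE; apply/forallP=> x; apply/implyP=> xC.
  have /implyP/(_ (memDS' xC (mem0v C'))) := h (row_mx x 0).
  rewrite big_split_ord /=; under eq_bigr do rewrite !row_mxEl.
  under [X in _ + X]eq_bigr do rewrite !row_mxEr.
  by rewrite [X in _ + X]big1 ?addr0 // => i _; rewrite mxE mul0r.
have /implyP/(_ (memDS' (mem0v C) xC)) := h (row_mx 0 x).
rewrite big_split_ord /=; under eq_bigr do rewrite !row_mxEl.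
under [X in _ + X]eq_bigr do rewrite !row_mxEr.
by rewrite big1 ?add0r // => i _; rewrite mxE mul0r.
Qed.
End H.

Theorem theorem4 (F : finFieldType) (n ns : nat)
    (C1 C2 : {vspace 'rV[F]_n}) (C3 C4 : {vspace 'rV[F]_ns}) :
  (C2 <= C1)%VS -> C2 != C1 ->
  (C4 <= C3)%VS -> C4 != C3 ->
  exists dz dx : nat,
    AQECC F (n + ns) ((\dim C1 + \dim C3) - (\dim C2 + \dim C4))%N dz dx /\
    (minn (mindist (vset C1)) (mindist (vset C3)) <= dz)%N /\
    (minn (mindist (edual C2)) (mindist (edual C4)) <= dx)%N.
Proof.
move=> s12 n12 s34 n34.
set D13 := DS C1 C3; set D24 := DS C2 C4.
have lt12 : (\dim C2 < \dim C1)%N.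
  by rewrite ltn_neqAle (dimv_leqif_eq s12) n12 (dimv_leqif_eq s12).
have lt34 : (\dim C4 < \dim C3)%N.
  by rewrite ltn_neqAle (dimv_leqif_eq s34) n34 (dimv_leqif_eq s34).
have hb : forall a b : nat, (minn a b <= n.+1)%N -> (minn a b <= (n + ns).+1)%N.
  by move=> a b h; apply: leq_trans h _; rewrite ltnS leq_addr.
exists (minwt (vset D13 :\: vset D24)), (minwt (edual D24 :\: edual D13)).
split; [|split].
- exists D13, D24; split => //.
  + exact: DS_sub.
  + apply/eqP=> e; have := congr1 (fun V => \dim V) e; rewrite /= !dimDS.
    move=> e'; have := leq_add lt12 lt34; rewrite addSn addnS e' => /ltnW.
    by rewrite ltnn.
  + by rewrite !dimDS.
- apply: minwt_ge; first by apply: hb; rewrite geq_min mindist_le.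
  move=> x; rewrite !inE => /andP[xn24 x13].
  have [a13 b13] := memDS x13.
  case: (boolP (lsubmx x \in C2)) => a2; last first.
    have : lsubmx x \in vset C1 :\ 0.
      rewrite !inE a13 andbT; apply: contraNneq a2 => ->; exact: mem0v.
    move/(minwt_le (S := vset C1 :\ 0)) => h.
    rewrite geq_min; apply/orP; left; apply: leq_trans h _.
    by rewrite -{2}[x]hsubmxK wt_l.
  case: (boolP (rsubmx x \in C4)) => b4.
    by move: xn24; rewrite -[x]hsubmxK memDS'.
  have : rsubmx x \in vset C3 :\ 0.
    rewrite !inE b13 andbT; apply: contraNneq b4 => ->; exact: mem0v.
  move/(minwt_le (S := vset C3 :\ 0)) => h.
  rewrite geq_min; apply/orP; right; apply: leq_trans h _.
  by rewrite -{2}[x]hsubmxK wt_r.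
- apply: minwt_ge; first by apply: hb; rewrite geq_min mindist_le.
  move=> y; rewrite !inE => /andP[yn13 y24].
  have y24' : y \in edual D24 by rewrite inE.
  have [a2 b4] := edualDS y24'.
  have ynz : y != 0 by apply: contraNneq yn13 => ->; have := edual0 D13; rewrite inE.
  case: (eqVneq (lsubmx y) 0) => a0.
    have bnz : rsubmx y != 0.
      apply: contraNneq ynz => b0; by rewrite -[y]hsubmxK a0 b0 row_mx0.
    have : rsubmx y \in edual C4 :\ 0 by rewrite in_setD1 bnz b4.
    move/(minwt_le (S := edual C4 :\ 0)) => h.
    rewrite geq_min; apply/orP; right; apply: leq_trans h _.
    by rewrite -{2}[y]hsubmxK wt_r.
  have : lsubmx y \in edual C2 :\ 0 by rewrite in_setD1 a0 a2.
  move/(minwt_le (S := edual C2 :\ 0)) => h.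
  rewrite geq_min; apply/orP; left; apply: leq_trans h _.
  by rewrite -{2}[y]hsubmxK wt_l.
Qed.
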